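(* Let $(C(G_i,S_i))_{i\in I}$ be an esperantist family of Cayley graphs of finite groups $G_i$ with symmetric generating sets $S_i$ (of common cardinality), and let $N_i\le G_i$ be subgroups such that $$\log(2[G_i:N_i])\ge\delta\log(2|G_i|)$$ for all $i$, for some $\delta>0$ independent of $i$. Then the family of Cayley–Schreier graphs $(C(G_i/N_i,S_i))_{i\in I}$ is also an esperantist family.
   Context: For a group $G$ with finite symmetric generating set $S$ and subgroup $H$, $C(G/H,S)$ is the $|S|$-regular graph (loops and multiple edges allowed) with vertex set $G/H$ and an edge from $xH$ to $sxH$ for each $s\in S$; for $H=1$ this is the Cayley graph $C(G,S)$. For a connected $r$-regular graph $\Gamma$, $\lambda_1(\Gamma)$ is the smallest nonzero eigenvalue of $r\,\mathrm{Id}-A(\Gamma)$. A family $(\Gamma_i)$ of connected $r$-regular graphs is esperantist if for every $N$ only finitely many $i$ have at most $N$ vertices, and there exist $c>0$, $A\ge0$ with $\lambda_1(\Gamma_i)\ge c/(\log 2|\Gamma_i|)^A$ for all $i$. *)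

(* Defs.v *)
From HB Require Import structures.
From mathcomp Require Import all_boot all_order all_fingroup.
From Stdlib Require Import Reals.

Set Implicit Arguments.
Unset Strict Implicit.
Unset Printing Implicit Defensive.

Local Open Scope group_scope.

Definition rsum (T : Type) (f : T -> R) (s : seq T) : R :=
  foldr (fun x acc => Rplus (f x) acc) 0%R s.

Definition schreier_vertices (gT : finGroupType) (H : {group gT}) : {set {set gT}} :=
  lcosets H [set: gT].

Definition schreier_rel (gT : finGroupType) (S : {set gT}) : rel {set gT} :=
  fun C D => [exists s in S, s *: C == D].

Definition schreier_connected (gT : finGroupType) (S : {set gT}) (H : {group gT}) : Prop :=
  forall C D, C \in schreier_vertices H -> D \in schreier_vertices H ->
    connect (schreier_rel S) C D.

(* lam is a (real) eigenvalue of |S| Id - A, where A is the adjacency matrix of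
   C(G/H,S): (A f)(xH) = sum_{s in S} f(s xH)  (loops and multiple edges counted). *)
Definition schreier_laplacian_eigenvalue (gT : finGroupType) (S : {set gT})
    (H : {group gT}) (lam : R) : Prop :=
  exists f : {set gT} -> R,
    (exists C, C \in schreier_vertices H /\ f C <> 0%R) /\
    forall C, C \in schreier_vertices H ->
      (INR #|S| * f C - rsum (fun s => f (s *: C)) (enum S) = lam * f C)%R.

Definition esperantist (I : Type) (gT : I -> finGroupType)
    (S : forall i, {set gT i}) (H : forall i, {group gT i}) (r : nat) : Prop :=
  (forall i, #|S i| = r /\ schreier_connected (S i) (H i)) /\
  (forall N : nat, exists l : list I, forall i,
      (#|schreier_vertices (H i)| <= N)%N -> List.In i l) /\
  (exists c A : R, (0 < c)%R /\ (0 <= A)%R /\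
     forall i lam, schreier_laplacian_eigenvalue (S i) (H i) lam -> lam <> 0%R ->
       (c / Rpower (ln (2 * INR #|schreier_vertices (H i)|)) A <= lam)%R).

(* Main.v *)
Require Import Defs.
From HB Require Import structures.
From mathcomp Require Import all_boot all_order all_fingroup.
From Stdlib Require Import Reals Lra Lia.

Lemma rsum_ext (T : Type) (f g : T -> R) (s : seq T) :
  (forall x, f x = g x) -> rsum f s = rsum g s.
Proof. move=> H; elim: s => [|x s IH] //=; by rewrite H IH. Qed.

Lemma connect_map (T : finType) (e e' : rel T) (phi : T -> T) a b :
  (forall u v, e u v -> e' (phi u) (phi v)) -> connect e a b ->
  connect e' (phi a) (phi b).
Proof.
move=> H /connectP [p pth ->]; elim: p a pth => [|y p IH] a /=.
  by rewrite connect0.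
case/andP=> h hp; exact: connect_trans (connect1 (H _ _ h)) (IH _ hp).
Qed.

Lemma ln_le' x y : (0 < x)%R -> (x <= y)%R -> (ln x <= ln y)%R.
Proof.
move=> hx [hxy|->]; last by apply: Rle_refl.
by apply: Rlt_le; apply: ln_increasing.
Qed.

Lemma real_bound (c A d g n lam : R) :
  (0 < c)%R -> (0 <= A)%R -> (0 < d)%R -> (1 <= g)%R -> (1 <= n)%R ->
  (d * ln (2 * g) <= ln (2 * n))%R ->
  (c / Rpower (ln (2 * g)) A <= lam)%R ->
  (c * Rpower d A / Rpower (ln (2 * n)) A <= lam)%R.
Proof.
move=> hc hA hd hg hn hle hb.
have hLg : (0 < ln (2 * g))%R.
  rewrite -ln_1; apply: ln_increasing; lra.
have hPd : (0 < Rpower d A)%R by rewrite /Rpower; apply: exp_pos.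
have hPg : (0 < Rpower (ln (2 * g)) A)%R by rewrite /Rpower; apply: exp_pos.
have hm : (Rpower d A * Rpower (ln (2 * g)) A <= Rpower (ln (2 * n)) A)%R.
  rewrite Rpower_mult_distr //; apply: Rle_Rpower_l => //; split => //.
  by apply: Rmult_lt_0_compat.
apply: Rle_trans hb.
apply: Rle_trans (_ : (c * Rpower d A * / (Rpower d A * Rpower (ln (2 * g)) A)
   <= _)%R).
  rewrite /Rdiv; apply: Rmult_le_compat_l.
    by apply: Rlt_le; apply: Rmult_lt_0_compat.
  apply: Rinv_le_contravar => //; by apply: Rmult_lt_0_compat.
right; field; lra.
Qed.

Lemma card_vert1 (gT : finGroupType) :
  #|schreier_vertices (1%G : {group gT})| = #|gT|.
Proof.
by rewrite /schreier_vertices (card_lcosets (setT_group gT)) indexg1 /= cardsT.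
Qed.

Lemma card_vertN (gT : finGroupType) (N : {group gT}) :
  #|schreier_vertices N| = #|[set: gT] : N|%g.
Proof. by rewrite /schreier_vertices (card_lcosets (setT_group gT)). Qed.

Theorem proposition3p2 (I : Type) (gT : I -> finGroupType)
    (S : forall i, {set gT i}) (N : forall i, {group gT i}) (r : nat) (delta : R) :
  (forall i, <<S i>>%g = [set: gT i]) ->
  (forall i (x : gT i), x \in S i -> (x^-1)%g \in S i) ->
  esperantist S (fun i => 1%G) r ->
  (0 < delta)%R ->
  (forall i, (delta * ln (2 * INR #|gT i|) <= ln (2 * INR (#|[set: gT i] : N i|)%g))%R) ->
  esperantist S N r.
Proof.
move=> _ _ [Hreg [Hfin [c [A [Hc [HA Hbd]]]]]] Hd Hidx.
have Hg1 : forall i, (1 <= INR #|gT i|)%R.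
  move=> i; apply: (le_INR 1); apply/leP; apply/card_gt0P; by exists 1%g.
have Hn1 : forall i, (1 <= INR #|[set: gT i] : N i|%g)%R.
  move=> i; apply: (le_INR 1); apply/leP; exact: indexg_gt0.
split; [|split].
- move=> i; have [HS Hcon] := Hreg i; split => // C D.
  case/lcosetsP=> x _ -> /lcosetsP [y _ ->].
  have := Hcon (x *: 1%G)%g (y *: 1%G)%g.
  rewrite !mem_lcosets !mulg1 !inE => /(_ isT isT).
  move=> Hc'; have := @connect_map _ _ (schreier_rel (S i)) (fun C => (C * N i)%g) _ _ _ Hc'.
  rewrite /=; apply => u v /existsP [s /andP [hs /eqP <-]].
  apply/existsP; exists s; rewrite hs /=; by rewrite mulgA.
- move=> M.
  have [K HK] := INR_unbounded (exp (ln (2 * INR M) / delta)).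
  have [l Hl] := Hfin K; exists l => i Hi; apply: Hl.
  rewrite card_vert1; rewrite card_vertN in Hi.
  have hM : (INR #|[set: gT i] : N i|%g <= INR M)%R by apply: le_INR; apply/leP.
  have h1 := Hidx i; have h2 := Hg1 i; have h3 := Hn1 i.
  have h4 : (ln (2 * INR #|[set: gT i] : N i|%g) <= ln (2 * INR M))%R.
    apply: ln_le'; lra.
  have h5 : (ln (2 * INR #|gT i|) <= ln (2 * INR M) / delta)%R.
    apply (Rmult_le_reg_l delta) => //; rewrite /Rdiv; field_simplify; lra.
  have h6 : (2 * INR #|gT i| <= exp (ln (2 * INR M) / delta))%R.
    apply: Rnot_lt_le => hlt.
    have := ln_increasing _ _ (exp_pos _) hlt; rewrite ln_exp; lra.
  have : (INR #|gT i| < INR K)%R by lra.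
  move/INR_lt => hh; apply/leP; lia.
- exists (c * Rpower delta A)%R, A; split; [|split] => //.
    apply: Rmult_lt_0_compat => //; rewrite /Rpower; apply: exp_pos.
  move=> i lam [f [[C0 [HC0 Hf0]] Heq]] Hlam.
  rewrite card_vertN.
  refine (real_bound _ _ _ _ _ _ _ _ _ _ _ _ _); [exact Hc|exact HA|exact Hd|exact (Hg1 i)|exact (Hn1 i)|exact (Hidx i)|].
  rewrite -(card_vert1 (gT i)).
  apply: Hbd Hlam.
  exists (fun C => f (C * N i)%g); split.
    case/lcosetsP: HC0 => x _ HC; exists (x *: 1%G)%g; split.
      by rewrite mem_lcosets mulg1 inE.
    by rewrite /= mulg1 -HC.
  move=> C /lcosetsP [x _ ->].
  have HCN : ((x *: 1%G) * N i)%g \in schreier_vertices (N i).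
    by rewrite /= ?mulg1 mem_lcosets -[x]mulg1 mem_mulg ?inE ?group1.
  rewrite -(Heq _ HCN).
  congr (_ - _)%R; apply: rsum_ext => s /=; by rewrite -mulgA.
Qed.
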